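(* Let $r \ge 3$ and $0 \le k \le n$ be integers, and put $m = \lceil \frac{(r-2)k}{r-1} \rceil$. Let $g^{1\text{-}\mathrm{ff}}_r(n,k)$ be the maximum cardinality of a family $\mathcal{F} \subseteq \binom{[n]}{k}$ containing no $1$-focal family of size $r$. Then $$g^{1\text{-}\mathrm{ff}}_r(n,k) \le (r-1)\,\frac{\binom{n}{m}}{\binom{k}{m}}.$$
   Context: $\binom{[n]}{k}$ is the family of all $k$-element subsets of $[n]=\{1,\dots,n\}$; sets are identified with their characteristic vectors in $\{0,1\}^n$. For $b \in \{0,1\}$, a family $x^{(0)}, x^{(1)}, \dots, x^{(r-1)}$ of $r$ distinct vectors in $\{0,1\}^n$ is $b$-focal with focus $x^{(0)}$ if for every coordinate $i \in [n]$ with $x^{(0)}_i = b$, at least $r-2$ of the $r-1$ entries $x^{(1)}_i, \dots, x^{(r-1)}_i$ are equal to $b$. A family contains a $b$-focal family of size $r$ if some $r$ distinct members, with some choice of focus among them, form a $b$-focal family. *)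

(* Defs.v *)
From mathcomp Require Import all_boot all_order all_algebra.
Set Implicit Arguments. Unset Strict Implicit. Unset Printing Implicit Defensive.

(* Subsets of [n] = {1..n} are modelled as {set 'I_n}; the characteristic
   vector of X has X_i = 1 iff i \in X. *)

Definition one_focal (n r : nat) (S : {set {set 'I_n}}) (X0 : {set 'I_n}) : bool :=
  [&& #|S| == r, X0 \in S &
      [forall i : 'I_n, (i \in X0) ==> (r - 2 <= #|[set Y in S :\ X0 | i \in Y]|)]].

Definition contains_1ff (n r : nat) (F : {set {set 'I_n}}) : bool :=
  [exists S : {set {set 'I_n}}, exists X0 : {set 'I_n},
    (S \subset F) && one_focal r S X0].

Definition good_family (n k r : nat) (F : {set {set 'I_n}}) : bool :=
  [forall X in F, #|X| == k] && ~~ contains_1ff r F.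

Definition g1ff (r n k : nat) : nat :=
  \max_(F : {set {set 'I_n}} | good_family k r F) #|F|.

Definition ceil_div (a b : nat) : nat := (a + b - 1) %/ b.

(* Main.v *)
Require Import Defs.
From mathcomp Require Import all_boot all_order all_algebra.
From mathcomp Require Import zify.
Set Implicit Arguments. Unset Strict Implicit. Unset Printing Implicit Defensive.


Lemma sumb_card (X : finType) (A : {set X}) (b : pred X) :
  \sum_(x in A) (b x : nat) = #|[set x in A | b x]|.
Proof.
rewrite -sum1_card big_mkcond [RHS]big_mkcond /=.
by apply: eq_bigr => x _; rewrite !inE; case: (x \in A); case: (b x).
Qed.

Section Core.
Variables (n t : nat) (bad : pred {set 'I_n}).

Fixpoint pack (j : nat) (S : {set 'I_n}) : bool :=
  if j is j'.+1 then
    [exists T : {set 'I_n}, [&& T \subset S, #|T| == t, bad T & pack j' (S :\: T)]]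
  else true.

Definition freeset (S : {set 'I_n}) :=
  [set T : {set 'I_n} | T \subset S & (#|T| == t) && ~~ bad T].
Definition badset (S : {set 'I_n}) :=
  [set T : {set 'I_n} | T \subset S & (#|T| == t) && bad T].

Lemma split_count S : #|badset S| + #|freeset S| = 'C(#|S|, t).
Proof.
rewrite -cards_draws.
have -> : [set A : {set 'I_n} | A \subset S & #|A| == t] = badset S :|: freeset S.
  by apply/setP=> A; rewrite !inE; case: (A \subset S); case: (#|A| == t); case: (bad A).
rewrite cardsU.
have -> : badset S :&: freeset S = set0.
  by apply/setP=> A; rewrite !inE; case: (bad A); rewrite ?andbF.
by rewrite cards0 subn0.
Qed.

Lemma core j (S : {set 'I_n}) : 0 < j -> j * t <= #|S| -> ~~ pack j S -> 'C(#|S|, t) <= j * #|freeset S|.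
Proof.
elim: j S => [//|[|j] IH] S _ hS hp.
  rewrite mul1n -split_count.
  have -> : badset S = set0.
    apply/setP=> T; rewrite !inE; apply/negP => /andP [h1 /andP[h2 h3]].
    by move/negP: hp; apply; apply/existsP; exists T; rewrite h1 h2 h3.
  by rewrite cards0.
have hbadT : forall T, T \in badset S ->
    'C(#|S| - t, t) <= j.+1 * #|freeset (S :\: T)|.
  move=> T; rewrite inE => /andP [hTS /andP [/eqP hT hb]].
  have -> : #|S| - t = #|S :\: T| by rewrite cardsDS // hT.
  apply: IH => //.
  - rewrite cardsDS // hT; rewrite mulSn in hS.
    by rewrite leq_subRL ?(leq_trans _ hS) ?leq_addr // -hT subset_leq_card.
  - apply/negP => hp'; move/negP: hp; apply; apply/existsP; exists T.
    by rewrite hTS hT eqxx hb /=; exact hp'.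
set C := 'C(#|S| - t, t).
have Cpos : 0 < C.
  rewrite bin_gt0 leq_subRL.
    by apply: leq_trans hS; rewrite !mulSn addnA leq_addr.
  by apply: leq_trans hS; rewrite mulSn leq_addr.
set pairs := \sum_(T in badset S) \sum_(T' in freeset S) [disjoint T' & T].
have h1 : #|badset S| * C <= j.+1 * pairs.
  rewrite /pairs big_distrr /= -sum1_card big_distrl /=.
  apply: leq_sum => T hT; rewrite mul1n.
  apply: (leq_trans (hbadT T hT)); rewrite leq_mul2l; apply/orP; right.
  rewrite sumb_card; apply: subset_leq_card; apply/subsetP => T'.
  rewrite !inE subsetD.
  by case: (T' \subset S); case: [disjoint T' & T]; case: (#|T'| == t); case: (bad T').
have h2 : pairs <= #|freeset S| * C.
  rewrite /pairs exchange_big /= -sum1_card big_distrl /=.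
  apply: leq_sum => T' hT'; rewrite mul1n /C.
  have hT'c : #|S| - t = #|S :\: T'|.
    by move: hT'; rewrite inE => /andP [hs /andP [/eqP <- _]]; rewrite cardsDS.
  rewrite hT'c -cards_draws sumb_card; apply: subset_leq_card; apply/subsetP => T.
  rewrite !inE subsetD disjoint_sym.
  by case/andP => /and3P [-> -> _] ->.
have h3 : #|badset S| <= j.+1 * #|freeset S|.
  rewrite -(leq_pmul2r Cpos) -mulnA; apply: (leq_trans h1).
  by rewrite leq_mul2l h2 orbT.
by rewrite -split_count mulSn addnC leq_add2l.
Qed.

End Core.

Section Main.
Variables (n k r : nat) (F : {set {set 'I_n}}).
Hypothesis hk : forall X, X \in F -> #|X| = k.

Definition badX (X : {set 'I_n}) : pred {set 'I_n} :=
  fun T => [exists Y in F, (Y != X) && (X :\: Y \subset T)].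

Lemma diff_nonempty X Y : X \in F -> Y \in F -> Y != X -> X :\: Y != set0.
Proof.
move=> hX hY hYX; apply/negP => /eqP h.
have hs : X \subset Y by rewrite -setD_eq0 h.
move/negP: hYX; apply; apply/eqP/esym/eqP; rewrite eqEcard hs /=.
by rewrite (hk hX) (hk hY).
Qed.

Lemma pack_focal t X j S : X \in F -> pack t (badX X) j S ->
  exists G : {set {set 'I_n}},
    [/\ G \subset F :\ X, #|G| = j, (forall Y, Y \in G -> X :\: Y \subset S) &
        forall i, i \in X -> (#|[set Y in G | i \notin Y]| <= 1)%N].
Proof.
move=> hX; elim: j S => [|j IH] S /=.
  move=> _; exists set0; split => //; first by rewrite sub0set.
  - by rewrite cards0.
  - by move=> Y; rewrite inE.
  - move=> i _; suff -> : [set Y : {set 'I_n} in set0 | i \notin Y] = set0 :> {set {set 'I_n}}.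
      by rewrite cards0.
    by apply/setP => Y; rewrite !inE.
case/existsP => T /and4P [hTS _ /existsP [Y /andP [hYF /andP [hYX hXY]]] hp].
have [G [hGF hGc hGS hGi]] := IH _ hp.
have hYG : Y \notin G.
  apply/negP => hYG; move: (hGS Y hYG); rewrite subsetD => /andP [_ hd].
  have := diff_nonempty hX hYF hYX; apply/negP; rewrite negbK.
  by rewrite -(setIidPl hXY) (disjoint_setI0 hd).
exists (Y |: G); split.
- by rewrite subUset sub1set !inE hYX hYF hGF.
- by rewrite cardsU1 hYG hGc.
- move=> Y'; rewrite !inE => /orP [/eqP -> | hY'].
    exact: subset_trans hXY hTS.
  by apply: subset_trans (hGS _ hY') _; apply: subsetDl.
- move=> i hi; case hiY: (i \in Y).
    apply: leq_trans (hGi i hi); apply: subset_leq_card; apply/subsetP => Z.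
    rewrite !inE => /andP [/orP [/eqP Ez | hZ] hiZ]; last by rewrite hZ hiZ.
    by rewrite Ez hiY in hiZ.
  rewrite -(cards1 Y); apply: subset_leq_card; apply/subsetP => Z.
  rewrite !inE => /andP [/orP [// | hZ] hiZ]; exfalso.
  have hiT : i \in T by apply: (subsetP hXY); rewrite inE hiY hi.
  have := subsetP (hGS Z hZ) i; rewrite !inE hiZ hi hiT => /(_ isT).
  done.
Qed.

Lemma card_split (T : finType) (G : {set T}) (p : pred T) :
  (#|[set Y in G | p Y]| + #|[set Y in G | ~~ p Y]|)%N = #|G|.
Proof.
rewrite -!sumb_card -big_split /= -sum1_card; apply: eq_bigr => x _.
by case: (p x).
Qed.

Hypothesis hr : (3 <= r)%N.
Hypothesis hno : ~~ contains_1ff r F.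

Lemma not_pack t X : X \in F -> ~~ pack t (badX X) (r - 1) X.
Proof.
move=> hX; apply/negP => hp.
have [G [hGF hGc _ hGi]] := pack_focal hX hp.
have hXG : X \notin G.
  by apply/negP => /(subsetP hGF); rewrite !inE eqxx.
move/negP: hno; apply; apply/existsP; exists (X |: G); apply/existsP; exists X.
apply/andP; split.
  by rewrite subUset sub1set hX (subset_trans hGF) // subD1set.
apply/and3P; split.
- by rewrite cardsU1 hXG hGc /= subnKC // (leq_trans _ hr).
- by rewrite !inE eqxx.
- apply/forallP => i; apply/implyP => hi; rewrite setU1K //.
  have := card_split G (fun Y => i \in Y); rewrite hGc => hs.
  have := hGi i hi; move: hs.
  set a := #|_|; set b := #|_|; move=> hs hb.
  lia.
Qed.

Variable m : nat.
Hypotheses (hmk : (m <= k)%N) (hkt : ((r - 1) * (k - m) <= k)%N).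

Definition priv (X : {set 'I_n}) := [set M : {set 'I_n} |
  [&& M \subset X, #|M| == m & [forall Y in F, (Y != X) ==> ~~ (M \subset Y)]]].

Lemma priv_lb (X : {set 'I_n}) : X \in F -> ('C(k, m) <= (r - 1) * #|priv X|)%N.
Proof.
move=> hX; set t := (k - m)%N.
have h := @core n t (badX X) (r - 1) X _ _ (not_pack t hX).
rewrite hk // bin_sub // in h.
apply: leq_trans (h _ _) _.
- by rewrite subn_gt0 (leq_trans _ hr).
- exact hkt.
rewrite leq_mul2l; apply/orP; right.
rewrite -(card_in_imset (f := fun T => X :\: T)).
  apply: subset_leq_card; apply/subsetP => M /imsetP [T hT ->].
  move: hT; rewrite inE => /andP [hTX /andP [/eqP hTc hnb]].
  rewrite inE subsetDl cardsDS // hk // hTc subKn // eqxx /=.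
  apply/forallP => Y; apply/implyP => hY; apply/implyP => hYX; apply/negP => hs.
  move/negP: hnb; apply; apply/existsP; exists Y; rewrite hY hYX /=.
  apply/subsetP => x; rewrite !inE => /andP [hxY hxX]; apply/negPn/negP => hxT.
  have : x \in X :\: T by rewrite inE hxT hxX.
  by move/(subsetP hs); rewrite (negbTE hxY).
move=> T1 T2; rewrite !inE => /andP [h1 _] /andP [h2 _] e; apply/setP => x.
have := congr1 (fun A : {set 'I_n} => x \in A) e; rewrite !inE /=; case hx: (x \in X).
  by rewrite !andbT => /negb_inj.
move=> _; apply/idP/idP => hT.
  by rewrite (subsetP h1 _ hT) in hx.
by rewrite (subsetP h2 _ hT) in hx.
Qed.

Lemma sum_priv : (\sum_(X in F) #|priv X| <= 'C(n, m))%N.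
Proof.
set D := [set M : {set 'I_n} | #|M| == m].
have hD : #|D| = 'C(n, m) by rewrite card_draws card_ord.
have e : forall X, #|priv X| = (\sum_(M in D) (M \in priv X))%N.
  move=> X; rewrite sumb_card; apply: eq_card => M; rewrite !inE.
  by case: (M \subset X); case: (#|M| == m).
rewrite (eq_bigr _ (fun X _ => e X)) exchange_big /= -hD -sum1_card.
apply: leq_sum => M _; rewrite sumb_card; apply/card_le1_eqP => X1 X2.
rewrite !inE => /andP [h1 /and3P [_ _ /forallP f1]] /andP [h2 /and3P [h3 _ _]].
apply/eqP; apply/negPn/negP => hne.
by have := f1 X2; rewrite h2 hne h3.
Qed.

Lemma main_bound : (#|F| * 'C(k, m) <= (r - 1) * 'C(n, m))%N.
Proof.
rewrite -sum_nat_const; apply: (@leq_trans (\sum_(X in F) (r - 1) * #|priv X|)); first by apply: leq_sum => X hX; exact: priv_lb.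
by rewrite -big_distrr /= leq_mul2l sum_priv orbT.
Qed.

End Main.

Import Order.TTheory GRing.Theory Num.Theory.
Local Open Scope ring_scope.

Theorem theorem5p2 (r n k : nat) (hr : (3 <= r)%N) (hkn : (k <= n)%N) :
  let m := ceil_div ((r - 2) * k) (r - 1) in
  (g1ff r n k)%:R <= (r - 1)%:R * 'C(n, m)%:R / 'C(k, m)%:R :> rat.
Proof.
cbv zeta; set m := ceil_div _ _.
have hd : (0 < r - 1)%N by rewrite subn_gt0 (leq_trans _ hr).
have [hmk hkt] : (m <= k)%N /\ ((r - 1) * (k - m) <= k)%N.
  rewrite /m /ceil_div.
  have := divn_eq ((r - 2) * k + (r - 1) - 1) (r - 1).
  have := ltn_pmod ((r - 2) * k + (r - 1) - 1) hd.
  set q := (_ %/ _)%N; set rho := (_ %% _)%N.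
  move=> h1 h2.
  have e : (r - 2 = (r - 1) - 1)%N by lia.
  move: h1 h2; rewrite e; set d := (r - 1)%N; move: hd; clearbody d q rho.
  move=> hd h1 h2; split; nia.
have hc : (0 < 'C(k, m))%N by rewrite bin_gt0.
have hg : (g1ff r n k * 'C(k, m) <= (r - 1) * 'C(n, m))%N.
  rewrite -leq_divRL //; apply/bigmax_leqP => F /andP [/forallP hF hno].
  rewrite leq_divRL //; apply: main_bound => //.
  by move=> X hX; apply/eqP; have := hF X; rewrite hX.
rewrite ler_pdivlMr ?ltr0n // -!natrM ler_nat.
exact: hg.
Qed.
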